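(* Let $\mathcal{T}$ be a triangulated category with countable coproducts and $Z\in\mathcal{T}$. Suppose $0=Y_0\xrightarrow{f_0}Y_1\xrightarrow{f_1}Y_2\to\cdots$ is a countable direct system in $\mathcal{T}$ where each $f_i$ lies in a triangle $Y_i\xrightarrow{f_i}Y_{i+1}\to S_i\to\Sigma Y_i$ with $S_i\in{}^\perp Z$. Then $\operatorname{hocolim}Y_i\in{}^\perp Z$.
   Context: ${}^\perp Z=\{A\in\mathcal{T}\mid\mathcal{T}(A,Z)=0\}$. The homotopy colimit of a sequence $Y_0\xrightarrow{f_0}Y_1\to\cdots$ is the object $\operatorname{hocolim}Y_i$ in a triangle $\coprod Y_i\xrightarrow{1-\coprod f_i}\coprod Y_i\to\operatorname{hocolim}Y_i\to\Sigma\coprod Y_i$. *)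

(* Defs.v *)
From HB Require Import structures.
From mathcomp Require Import all_boot all_algebra.
Set Implicit Arguments.
Unset Strict Implicit.
Unset Printing Implicit Defensive.
Import GRing.Theory.
Local Open Scope ring_scope.

Record Cat := {
  Obj :> Type;
  Mor : Obj -> Obj -> zmodType;
  comp : forall X Y Z : Obj, Mor Y Z -> Mor X Y -> Mor X Z;
  idm : forall X : Obj, Mor X X }.

Arguments Mor {c}.
Arguments comp {c X Y Z}.
Arguments idm {c}.
Notation "g \oc f" := (comp g f) (at level 40, left associativity).

Definition preadditive (C : Cat) : Prop :=
  (forall (W X Y Z : C) (h : Mor Y Z) (g : Mor X Y) (f : Mor W X),
      h \oc (g \oc f) = (h \oc g) \oc f)
  /\ (forall (X Y : C) (f : Mor X Y), idm Y \oc f = f /\ f \oc idm X = f)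
  /\ (forall (X Y Z : C) (g1 g2 : Mor Y Z) (f : Mor X Y),
        (g1 + g2) \oc f = g1 \oc f + g2 \oc f)
  /\ (forall (X Y Z : C) (g : Mor Y Z) (f1 f2 : Mor X Y),
        g \oc (f1 + f2) = g \oc f1 + g \oc f2).

Definition is_iso (C : Cat) (X Y : C) (f : Mor X Y) : Prop :=
  exists g : Mor Y X, g \oc f = idm X /\ f \oc g = idm Y.

Definition is_zero_obj (C : Cat) (O : C) : Prop :=
  (forall (X : C) (u : Mor O X), u = 0) /\ (forall (X : C) (u : Mor X O), u = 0).

Definition is_coproduct (C : Cat) (I : Type) (Y : I -> C) (P : C)
    (iota : forall i, Mor (Y i) P) : Prop :=
  forall (W : C) (phi : forall i, Mor (Y i) W),
    exists! u : Mor P W, forall i, u \oc iota i = phi i.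
Arguments is_coproduct {C I} Y P iota.

Definition has_binary_coproducts (C : Cat) : Prop :=
  forall (A B : C), exists (P : C) (iota : forall b : bool, Mor (if b then A else B) P),
    is_coproduct (fun b : bool => if b then A else B) P iota.

Definition has_countable_coproducts (C : Cat) : Prop :=
  forall Y : nat -> C, exists (P : C) (iota : forall i, Mor (Y i) P),
    is_coproduct Y P iota.

Definition additive (C : Cat) : Prop :=
  preadditive C /\ (exists O : C, is_zero_obj O) /\ has_binary_coproducts C.

Record TriData := {
  cat :> Cat;
  Sig : cat -> cat;
  Sigm : forall X Y : cat, Mor X Y -> Mor (Sig X) (Sig Y);
  dist : forall X Y Z : cat, Mor X Y -> Mor Y Z -> Mor Z (Sig X) -> Prop }.

Arguments Sig {t}.
Arguments Sigm {t X Y}.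
Arguments dist {t X Y Z}.

Definition shift_ok (T : TriData) : Prop :=
  (forall X : T, Sigm (idm X) = idm (Sig X))
  /\ (forall (X Y Z : T) (g : Mor Y Z) (f : Mor X Y), Sigm (g \oc f) = Sigm g \oc Sigm f)
  /\ (forall (X Y : T) (f g : Mor X Y), Sigm (f + g) = Sigm f + Sigm g)
  /\ (forall X Y : T, bijective (@Sigm T X Y))
  /\ (forall Y : T, exists (X : T) (u : Mor (Sig X) Y), is_iso u).

Definition TR1 (T : TriData) : Prop :=
  (forall (X Y Z X' Y' Z' : T) (f : Mor X Y) (g : Mor Y Z) (h : Mor Z (Sig X))
      (f' : Mor X' Y') (g' : Mor Y' Z') (h' : Mor Z' (Sig X'))
      (a : Mor X X') (b : Mor Y Y') (c : Mor Z Z'),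
      is_iso a -> is_iso b -> is_iso c ->
      b \oc f = f' \oc a -> c \oc g = g' \oc b -> Sigm a \oc h = h' \oc c ->
      dist f g h -> dist f' g' h')
  /\ (forall (O : T), is_zero_obj O -> forall X : T,
        dist (idm X) (0 : Mor X O) (0 : Mor O (Sig X)))
  /\ (forall (X Y : T) (f : Mor X Y),
        exists (Z : T) (g : Mor Y Z) (h : Mor Z (Sig X)), dist f g h).

Definition TR2 (T : TriData) : Prop :=
  forall (X Y Z : T) (f : Mor X Y) (g : Mor Y Z) (h : Mor Z (Sig X)),
    dist f g h <-> dist g h (- Sigm f).

Definition TR3 (T : TriData) : Prop :=
  forall (X Y Z X' Y' Z' : T) (f : Mor X Y) (g : Mor Y Z) (h : Mor Z (Sig X))
      (f' : Mor X' Y') (g' : Mor Y' Z') (h' : Mor Z' (Sig X'))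
      (a : Mor X X') (b : Mor Y Y'),
    dist f g h -> dist f' g' h' -> b \oc f = f' \oc a ->
    exists c : Mor Z Z', c \oc g = g' \oc b /\ Sigm a \oc h = h' \oc c.

Definition TR4 (T : TriData) : Prop :=
  forall (X Y Z Z' X' Y' : T) (f : Mor X Y) (g : Mor Y Z)
      (a1 : Mor Y Z') (b1 : Mor Z' (Sig X))
      (a2 : Mor Z X') (b2 : Mor X' (Sig Y))
      (a3 : Mor Z Y') (b3 : Mor Y' (Sig X)),
    dist f a1 b1 -> dist g a2 b2 -> dist (g \oc f) a3 b3 ->
    exists (u : Mor Z' Y') (v : Mor Y' X'),
      dist u v (Sigm a1 \oc b2)
      /\ u \oc a1 = a3 \oc g /\ b3 \oc u = b1
      /\ v \oc a3 = a2 /\ b2 \oc v = Sigm f \oc b3.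

Definition triangulated (T : TriData) : Prop :=
  additive T /\ shift_ok T /\ TR1 T /\ TR2 T /\ TR3 T /\ TR4 T.

Definition left_orth (T : Cat) (Z A : T) : Prop := forall u : Mor A Z, u = 0.

(* Main.v *)
Require Import Defs.
From HB Require Import structures.
From mathcomp Require Import all_boot all_algebra.
From Stdlib Require Import ClassicalEpsilon.
Import GRing.Theory.
Local Open Scope ring_scope.

Set Implicit Arguments.
Unset Strict Implicit.
Section Aux.
Lemma assocT (T : TriData) (HT : triangulated T) (W X Y Z : T)
  (h : Mor Y Z) (g : Mor X Y) (f : Mor W X) : h \oc (g \oc f) = (h \oc g) \oc f.
Proof. by case: HT => [[[A _] _] _]; apply: A. Qed.
Lemma idlT (T : TriData) (HT : triangulated T) (X Y : T) (f : Mor X Y) : idm Y \oc f = f.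
Proof. by case: HT => [[[_ [A _]] _] _]; case: (A _ _ f). Qed.
Lemma idrT (T : TriData) (HT : triangulated T) (X Y : T) (f : Mor X Y) : f \oc idm X = f.
Proof. by case: HT => [[[_ [A _]] _] _]; case: (A _ _ f). Qed.
Lemma distlT (T : TriData) (HT : triangulated T) (X Y Z : T) (g1 g2 : Mor Y Z) (f : Mor X Y) :
  (g1 + g2) \oc f = g1 \oc f + g2 \oc f.
Proof. by case: HT => [[[_ [_ [A _]]] _] _]; apply: A. Qed.
Lemma distrT (T : TriData) (HT : triangulated T) (X Y Z : T) (g : Mor Y Z) (f1 f2 : Mor X Y) :
  g \oc (f1 + f2) = g \oc f1 + g \oc f2.
Proof. by case: HT => [[[_ [_ [_ A]]] _] _]; apply: A. Qed.

Lemma comp0l (T : TriData) (HT : triangulated T) (X Y W : T) (f : Mor X Y) :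
  (0 : Mor Y W) \oc f = 0.
Proof.
have E := distlT HT (0 : Mor Y W) 0 f; rewrite addr0 in E.
move/(congr1 (fun z => z - (0 : Mor Y W) \oc f)): E; rewrite addrK subrr => ->//.
Qed.
Lemma comp0r (T : TriData) (HT : triangulated T) (X Y W : T) (g : Mor Y W) :
  g \oc (0 : Mor X Y) = 0.
Proof.
have E := distrT HT g (0 : Mor X Y) 0; rewrite addr0 in E.
move/(congr1 (fun z => z - g \oc (0 : Mor X Y))): E; rewrite addrK subrr => ->//.
Qed.
Lemma compNl (T : TriData) (HT : triangulated T) (X Y W : T) (g : Mor Y W) (f : Mor X Y) :
  (- g) \oc f = - (g \oc f).
Proof.
have E := distlT HT g (- g) f; rewrite subrr comp0l // in E.
by apply/eqP; rewrite -addr_eq0 addrC -E.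
Qed.
Lemma compNr (T : TriData) (HT : triangulated T) (X Y W : T) (g : Mor Y W) (f : Mor X Y) :
  g \oc (- f) = - (g \oc f).
Proof.
have E := distrT HT g f (- f); rewrite subrr comp0r // in E.
by apply/eqP; rewrite -addr_eq0 addrC -E.
Qed.

Lemma Sig0 (T : TriData) (HT : triangulated T) (X Y : T) : Sigm (0 : Mor X Y) = 0.
Proof.
case: HT => [_ [[_ [_ [A _]]] _]].
have E := A _ _ (0 : Mor X Y) 0; rewrite addr0 in E.
move/(congr1 (fun z => z - Sigm (0 : Mor X Y))): E; rewrite addrK subrr => ->//.
Qed.
Lemma SigN (T : TriData) (HT : triangulated T) (X Y : T) (f : Mor X Y) : Sigm (- f) = - Sigm f.
Proof.
have E : Sigm (f + - f) = Sigm f + Sigm (- f).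
  by case: HT => [_ [[_ [_ [A _]]] _]]; apply: A.
rewrite subrr Sig0 // in E.
by apply/eqP; rewrite -addr_eq0 addrC -E.
Qed.
Lemma SigM (T : TriData) (HT : triangulated T) (X Y Z : T) (g : Mor Y Z) (f : Mor X Y) :
  Sigm (g \oc f) = Sigm g \oc Sigm f.
Proof. by case: HT => [_ [[_ [A _]] _]]; apply: A. Qed.
Lemma Sigbij (T : TriData) (HT : triangulated T) (X Y : T) : bijective (@Sigm T X Y).
Proof. by case: HT => [_ [[_ [_ [_ [A _]]]] _]]; apply: A. Qed.
Lemma Sigsurj (T : TriData) (HT : triangulated T) (X Y : T) (y : Mor (Sig X) (Sig Y)) :
  exists x, y = Sigm x.
Proof. case: (Sigbij HT X Y) => s _ K; exists (s y); by rewrite K. Qed.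
Lemma Siginj (T : TriData) (HT : triangulated T) (X Y : T) (x y : Mor X Y) :
  Sigm x = Sigm y -> x = y.
Proof. case: (Sigbij HT X Y) => s K _ E; by rewrite -(K x) E K. Qed.

Lemma zero_exists (T : TriData) (HT : triangulated T) : exists O : T, is_zero_obj O.
Proof. by case: HT => [[_ [A _]] _]. Qed.

Lemma comp_dist (T : TriData) (HT : triangulated T) (X Y Zt : T)
  (f : Mor X Y) (g : Mor Y Zt) (h : Mor Zt (Sig X)) : dist f g h -> g \oc f = 0.
Proof.
move=> D.
have [O HO] := zero_exists HT.
have D0 : dist (idm X) (0 : Mor X O) (0 : Mor O (Sig X)).
  by case: HT => [_ [_ [[_ [A _]] _]]]; apply: A.
have TR3 : TR3 T by case: HT => [_ [_ [_ [_ [A _]]]]].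
have [c [Hc _]] := TR3 _ _ _ _ _ _ _ _ _ _ _ _ (idm X) f D0 D erefl.
by rewrite -Hc comp0r.
Qed.

Lemma exact_left (T : TriData) (HT : triangulated T) (X Y Zt W : T)
  (f : Mor X Y) (g : Mor Y Zt) (h : Mor Zt (Sig X)) (x : Mor Y W) :
  dist f g h -> x \oc f = 0 -> exists y : Mor Zt W, x = y \oc g.
Proof.
move=> D Hx.
have [O HO] := zero_exists HT.
have [X0 [u [ui [Hu1 Hu2]]]] : exists (X0 : T) (u : Mor (Sig X0) O), is_iso u.
  by case: HT => [_ [[_ [_ [_ [_ A]]]] _]]; apply: A.
have TR1 : TR1 T by case: HT => [_ [_ [A _]]].
have TR2 : TR2 T by case: HT => [_ [_ [_ [A _]]]].
have TR3 : TR3 T by case: HT => [_ [_ [_ [_ [A _]]]]].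
have D0 : dist (idm W) (0 : Mor W O) (0 : Mor O (Sig W)) by case: TR1 => [_ [A _]]; apply: A.
have isoid : forall V : T, is_iso (idm V).
  by move=> V; exists (idm V); rewrite idlT.
have D1 : dist (idm W) (0 : Mor W (Sig X0)) (0 : Mor (Sig X0) (Sig W)).
  case: TR1 => [A _]; apply: (A _ _ _ _ _ _ _ _ _ _ _ _ (idm W) (idm W) ui) D0 => //.
  - by exists u.
  - by rewrite (comp0r HT) (comp0l HT).
  - by rewrite !(comp0r HT) (comp0l HT).
have D2 : dist (0 : Mor X0 W) (idm W) (0 : Mor W (Sig X0)).
  by apply/TR2; rewrite Sig0 // oppr0.
have [c [Hc _]] := TR3 _ _ _ _ _ _ _ _ _ _ _ _ (0 : Mor X X0) x D D2 (etrans Hx (esym (comp0r HT X (0 : Mor X0 W)))).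
by exists c; rewrite Hc idlT.
Qed.

Lemma coprod_uniq (T : TriData) (I : Type) (Y : I -> T) (P : T) (iota : forall i, Mor (Y i) P)
  (W : T) (c1 c2 : Mor P W) : is_coproduct Y P iota ->
  (forall i, c1 \oc iota i = c2 \oc iota i) -> c1 = c2.
Proof.
move=> Hc E; have [u [Hu Hun]] := Hc W (fun i => c1 \oc iota i).
by rewrite -(Hun c1) // -(Hun c2).
Qed.
End Aux.
Unset Implicit Arguments.

Theorem lemma3p9 (T : TriData) (HT : triangulated T)
    (Hcop : has_countable_coproducts T) (Z : T)
    (Y S : nat -> T) (f : forall i, Mor (Y i) (Y i.+1))
    (g : forall i, Mor (Y i.+1) (S i)) (h : forall i, Mor (S i) (Sig (Y i))) :
  is_zero_obj (Y 0%N) ->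
  (forall i, dist (f i) (g i) (h i)) ->
  (forall i, left_orth Z (S i)) ->
  forall (P : T) (iota : forall i, Mor (Y i) P), is_coproduct Y P iota ->
  forall d : Mor P P, (forall i, d \oc iota i = iota i - iota i.+1 \oc f i) ->
  forall (H : T) (p : Mor P H) (q : Mor H (Sig P)), dist d p q ->
  left_orth Z H.
Proof.
move=> HY0 Dt HS P iota Hcp d Hd H p q Dd u.
have TR2 : TR2 T by case: HT => [_ [_ [_ [A _]]]].
have HYZ : forall i (x : Mor (Y i) Z), x = 0.
  elim=> [|i IH] x; first by case: HY0 => A _; apply: A.
  have [y ->] := exact_left HT (Dt i) (IH (x \oc f i)).
  by rewrite (HS i y) comp0l.
have Hup : u \oc p = 0.
  apply: (coprod_uniq Hcp) => i; rewrite comp0l //; exact: HYZ.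
have [w Hw] := exact_left HT (proj1 (TR2 _ _ _ d p q) Dd) Hup.
have [Z' [v [vi [Hv1 Hv2]]]] : exists (Z' : T) (v : Mor (Sig Z') Z), is_iso v.
  by case: HT => [_ [[_ [_ [_ [_ A]]]] _]]; apply: A.
have [w0 Hw0] := Sigsurj HT (vi \oc w).
have Hlift : forall i (a : Mor (Y i) Z'), exists b, a = b \oc f i.
  move=> i a.
  have D2 : dist (h i) (- Sigm (f i)) (- Sigm (g i)) := proj1 (TR2 _ _ _ _ _ _) (proj1 (TR2 _ _ _ _ _ _) (Dt i)).
  have E : Sigm a \oc h i = 0.
    have -> : Sigm a = vi \oc (v \oc Sigm a).
      by rewrite assocT // Hv1 idlT.
    by rewrite -assocT // (HS i (v \oc Sigm a \oc h i)) comp0r.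
  have [y Hy] := exact_left HT D2 E.
  have [b' Hb'] := Sigsurj HT y.
  exists (- b'); apply: (Siginj HT).
  by rewrite Hy Hb' SigM // compNr // SigN // compNl.
pose ext i a := proj1_sig (constructive_indefinite_description _ (Hlift i a)).
have Hext : forall i a, a = ext i a \oc f i.
  by move=> i a; rewrite /ext; case: constructive_indefinite_description.
pose psi i := w0 \oc iota i.
pose c := fix c (i : nat) : Mor (Y i) Z' :=
  match i as i0 return Mor (Y i0) Z' with
  | 0%N => 0
  | n.+1 => ext n (c n - psi n)
  end.
have Hc : forall i, c i.+1 \oc f i = c i - psi i.
  by move=> i; rewrite [c i.+1]/= -Hext.
have [cc [Hcc _]] := Hcp Z' c.
have Ew0 : w0 = cc \oc d.
  apply: (coprod_uniq Hcp) => i.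
  by rewrite -assocT // Hd distrT // compNr // assocT // !Hcc Hc opprB addrC subrK.
have Hdq : Sigm d \oc q = 0.
  have D3 : dist q (- Sigm d) (- Sigm p) := proj1 (TR2 _ _ _ _ _ _) (proj1 (TR2 _ _ _ d p q) Dd).
  by have := comp_dist HT D3; rewrite (compNl HT) => /eqP; rewrite oppr_eq0 => /eqP.
rewrite Hw.
have -> : w = v \oc (vi \oc w) by rewrite assocT // Hv2 idlT.
by rewrite Hw0 Ew0 (SigM HT) -!(assocT HT) Hdq !(comp0r HT).
Qed.
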